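(* Let $a_{n,0}$ denote the number of matchings of size $n$ with no occurrence of the endhered pattern $21$. Then $a_{1,0}=1$, $a_{2,0}=2$, and for all $n\ge2$, $$a_{n+1,0}=2n\,a_{n,0}+2(n-1)\,a_{n-1,0}.$$
   Context: A matching of size $n$ is a set of $n$ arcs $(a,b)$ with $1\le a<b\le 2n$ such that each point of $\{1,\dots,2n\}$ belongs to exactly one arc. An occurrence of the endhered pattern $21$ in a matching $\mu$ is a pair of arcs of $\mu$ of the form $(i+1,j+2),(i+2,j+1)$ (two nested arcs with consecutive starting points and consecutive ending points). *)

(* Defs.v *)
From mathcomp Require Import all_boot.
Set Implicit Arguments. Unset Strict Implicit. Unset Printing Implicit Defensive.

(* Points {1,...,2n} are represented 0-based as 'I_(n.*2); an arc (a,b) with a<b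
   is a pair of points. A matching of size n is a set of arcs covering each point
   exactly once. *)
Definition arc (n : nat) := ('I_(n.*2) * 'I_(n.*2))%type.

Definition is_matching (n : nat) (M : {set arc n}) : bool :=
  [forall e in M, (e.1 < e.2)%N] &&
  [forall p : 'I_(n.*2), #|[set e in M | (e.1 == p) || (e.2 == p)]| == 1].

Definition has_endhered21 (n : nat) (M : {set arc n}) : bool :=
  [exists e1 in M, exists e2 in M,
     ((e2.1 : nat) == e1.1 + 1) && ((e1.2 : nat) == e2.2 + 1)].

Definition a0 (n : nat) : nat :=
  #|[set M : {set arc n} | is_matching M && ~~ has_endhered21 M]|.

(* Main.v *)
Require Import Defs.
From mathcomp Require Import all_boot.
From mathcomp Require Import zify.
Require Import Defs.
Set Implicit Arguments. Unset Strict Implicit.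


Definition ex2 p q x := if x < p then x else if x.+1 < q then x.+1 else x.+2.
Definition cmp2 p q y := if y < p then y else if y < q then y.-1 else y - 2.
Definition insF p q (G : nat -> nat) x :=
  if x == p then q else if x == q then p else ex2 p q (G (cmp2 p q x)).
Definition remF p q (F : nat -> nat) x := cmp2 p q (F (ex2 p q x)).
Definition occ m (F : nat -> nat) x := [&& x.+1 < m, x.+1 < F x.+1 & F x == (F x.+1).+1].
Definition invP m (F : nat -> nat) :=
  forall x, x < m -> [/\ F x < m, F x <> x & F (F x) = x].
Definition agree m (F F' : nat -> nat) := forall x, x < m -> F x = F' x.

Ltac splitif := repeat match goal with
 | |- context [if ?b then _ else _] =>
   lazymatch b with context [if _ then _ else _] => fail | _ =>
   let h := fresh "h" in case: (boolP b) => h /= end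
 end.
Ltac crush := rewrite /ex2 /cmp2; splitif; lia.

Section Ex.
Variables p q : nat.
Hypothesis pq : p < q.
Lemma ex2_neqp x : ex2 p q x <> p. Proof. crush. Qed.
Lemma ex2_neqq x : ex2 p q x <> q. Proof. crush. Qed.
Lemma cmp2K y : y <> p -> y <> q -> ex2 p q (cmp2 p q y) = y.
Proof. move=> h1 h2; move: pq; crush. Qed.
Lemma ex2K x : cmp2 p q (ex2 p q x) = x. Proof. move: pq; crush. Qed.
Lemma ex2_lt x y : (ex2 p q x < ex2 p q y) = (x < y).
Proof. move: pq; rewrite /ex2; splitif; lia. Qed.
Lemma ex2_inj x y : ex2 p q x = ex2 p q y -> x = y.
Proof. move: pq; crush. Qed.
Lemma ex2_ltm m x : q < m.+2 -> (ex2 p q x < m.+2) = (x < m).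
Proof. move: pq => h0 h; rewrite /ex2; splitif; lia. Qed.
Lemma cmp2_ltm m y : q < m.+2 -> y < m.+2 -> y <> p -> y <> q -> cmp2 p q y < m.
Proof. move: pq; crush. Qed.
Lemma ex2S x : x.+1 <> p -> x.+2 <> q -> ex2 p q x.+1 = (ex2 p q x).+1.
Proof. move: pq; crush. Qed.
Lemma cmp2S y : y <> p -> y <> q -> y.+1 <> p -> y.+1 <> q ->
  cmp2 p q y.+1 = (cmp2 p q y).+1.
Proof. move: pq; crush. Qed.
End Ex.

Section InsRem.
Variables (p q m : nat).
Hypothesis pq : p < q.
Hypothesis qm : q < m.+2.

Lemma insF_p G : insF p q G p = q. Proof. by rewrite /insF eqxx. Qed.
Lemma insF_q G : insF p q G q = p.
Proof. rewrite /insF eqxx; case: eqP => //; lia. Qed.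
Lemma insF_ex2 G x : insF p q G (ex2 p q x) = ex2 p q (G x).
Proof.
rewrite /insF; case: eqP => [/ex2_neqp //|_]; case: eqP => [/ex2_neqq //|_].
by rewrite (ex2K pq).
Qed.

Lemma pt_cases y : y < m.+2 -> [\/ y = p, y = q | exists2 x, x < m & y = ex2 p q x].
Proof.
move=> ym; case: (y =P p) => [->|yp]; first by constructor 1.
case: (y =P q) => [->|yq]; first by constructor 2.
constructor 3; exists (cmp2 p q y); first exact: cmp2_ltm.
by rewrite (cmp2K pq).
Qed.

Lemma ex2_ltm' x : x < m -> ex2 p q x < m.+2.
Proof. by rewrite ex2_ltm. Qed.

Lemma ins_inv G : invP m G -> invP m.+2 (insF p q G).
Proof.
move=> iG y ym; case: (pt_cases ym) => [->|->|[x xm ->]].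
- rewrite insF_p insF_q; split => //; lia.
- rewrite insF_q insF_p; split => //; lia.
- case: (iG x xm) => [h1 h2 h3]; rewrite !insF_ex2 h3; split => //.
  + exact: ex2_ltm'.
  + by move/(ex2_inj pq).
Qed.

Lemma rem_inv F : invP m.+2 F -> F p = q -> invP m (remF p q F).
Proof.
move=> iF Fp x xm; rewrite /remF.
have ym := ex2_ltm' xm.
case: (iF _ ym) => [h1 h2 h3].
have Fq : F q = p by rewrite -Fp; case: (iF p (ltn_trans pq qm)).
have n1 : F (ex2 p q x) <> p by move=> e; apply: (@ex2_neqq _ _ pq x); move: h3; rewrite e Fp.
have n2 : F (ex2 p q x) <> q by move=> e; apply: (@ex2_neqp _ _ pq x); move: h3; rewrite e Fq.
rewrite (cmp2K pq) // h3 (ex2K pq); split => //.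
- exact: cmp2_ltm.
- by move=> e; apply: h2; rewrite -{2}e (cmp2K pq).
Qed.

Lemma insK F : invP m.+2 F -> F p = q -> agree m.+2 (insF p q (remF p q F)) F.
Proof.
move=> iF Fp y ym.
have Fq : F q = p by rewrite -Fp; case: (iF p (ltn_trans pq qm)).
case: (pt_cases ym) => [->|->|[x xm ->]]; first by rewrite insF_p.
  by rewrite insF_q.
rewrite insF_ex2 /remF.
have ym' := ex2_ltm' xm.
case: (iF _ ym') => [h1 h2 h3].
have n1 : F (ex2 p q x) <> p by move=> e; apply: (@ex2_neqq _ _ pq x); move: h3; rewrite e Fp.
have n2 : F (ex2 p q x) <> q by move=> e; apply: (@ex2_neqp _ _ pq x); move: h3; rewrite e Fq.
by rewrite (cmp2K pq).
Qed.

Lemma remK G x : remF p q (insF p q G) x = G x.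
Proof. by rewrite /remF insF_ex2 (ex2K pq). Qed.
End InsRem.

Lemma occ_agree m F F' x : agree m F F' -> occ m F x = occ m F' x.
Proof.
move=> h; rewrite /occ; case: (ltnP x.+1 m) => //= xm.
by rewrite !h // ltnW.
Qed.

Lemma inv_agree m F F' : agree m F F' -> invP m F -> invP m F'.
Proof.
move=> h iF x xm; case: (iF x xm) => [h1 h2 h3].
by rewrite -!h // h3.
Qed.

Lemma ins_agree p q m G G' : p < q -> q < m.+2 -> agree m G G' -> agree m.+2 (insF p q G) (insF p q G').
Proof.
move=> pq qm h y ym; rewrite /insF; case: eqP => // yp; case: eqP => // yq.
by rewrite h // cmp2_ltm.
Qed.

Lemma rem_agree p q m F F' : p < q -> q < m.+2 -> agree m.+2 F F' -> agree m (remF p q F) (remF p q F').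
Proof. by move=> pq qm h x xm; rewrite /remF h // ex2_ltm. Qed.

Lemma ex2_succ p q u v : p < q -> ex2 p q u = (ex2 p q v).+1 ->
  [/\ u = v.+1, v.+1 <> p & v.+2 <> q].
Proof. move=> pq; rewrite /ex2; splitif => e; split; lia. Qed.

Section Transfer.
Variables (p q m : nat) (G : nat -> nat).
Hypothesis pq : p < q.
Hypothesis qm : q < m.+2.
Local Notation F := (insF p q G).

Lemma T1 x : occ m G x -> x.+1 <> p -> x.+2 <> q -> (G x.+1).+1 <> p -> (G x.+1).+2 <> q ->
  occ m.+2 F (ex2 p q x).
Proof.
move=> /and3P [h1 h2 /eqP h3] n1 n2 n3 n4.
rewrite /occ -(ex2S pq n1 n2) !(insF_ex2 pq) (ex2_ltm pq x.+1 qm) h1 (ex2_lt pq) h2 /=.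
by rewrite h3 (ex2S pq n3 n4).
Qed.

Lemma T2 y : occ m.+2 F y -> y <> p -> y <> q -> y.+1 <> p -> y.+1 <> q ->
  [/\ occ m G (cmp2 p q y), (G (cmp2 p q y).+1).+1 <> p & (G (cmp2 p q y).+1).+2 <> q].
Proof.
move=> oc n1 n2 n3 n4.
have e0 := cmp2K pq n1 n2.
have e1 : y.+1 = ex2 p q (cmp2 p q y).+1 by rewrite -(cmp2S pq) // (cmp2K pq).
move: (cmp2 p q y) e0 e1 => x e0 e1.
move: oc; rewrite /occ e1 -e0 !(insF_ex2 pq) (ex2_ltm pq _ qm) (ex2_lt pq).
move=> /and3P [h1 h2 /eqP h3].
case: (ex2_succ pq h3) => [h4 h5 h6].
by rewrite /occ h1 h2 h4 eqxx.
Qed.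
End Transfer.

Lemma fib1 m G b : 0 < m -> invP m G -> 0 < b -> b < m.+2 ->
  (exists y, occ m.+2 (insF 0 b G) y) <->
  (b = (G 0).+2 \/ exists2 x, occ m G x & (b <> x.+2 /\ b <> (G x.+1).+2)).
Proof.
move=> m0 iG b0 bm; split.
- case=> y oc.
  have F0 : insF 0 b G 0 = b by rewrite insF_p.
  have Fb : insF 0 b G b = 0 by rewrite insF_q.
  case: (y =P 0) => [y0|yn0].
    left; move: oc; rewrite y0 /occ F0.
    case: (b =P 1) => [b1|bn1].
      by rewrite b1 in Fb *; rewrite Fb andbF.
    have e1 : 1 = ex2 0 b 0 by rewrite /ex2; case: ifP => //; lia.
    have F1 : insF 0 b G 1 = ex2 0 b (G 0) by rewrite {1}e1 (insF_ex2 b0).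
    rewrite F1 => /and3P [_ _ /eqP]; rewrite /ex2 /=; splitif; lia.
  case: (y =P b) => [yb|ynb].
    by move: oc; rewrite /occ yb Fb /= !andbF.
  case: (y.+1 =P b) => [yb|ynb1].
    by move: oc; rewrite /occ yb Fb /= !andbF.
  case: (T2 b0 bm oc yn0 ynb _ ynb1) => // h1 h2 h3.
  right; exists (cmp2 0 b y) => //; split; last by move=> e; exact: h3 (esym e).
  move: ynb ynb1; rewrite /cmp2 /=; splitif; lia.
- case=> [bG|[x ox [n1 n2]]].
    exists 0; rewrite /occ.
    have e1 : 1 = ex2 0 b 0 by rewrite /ex2; case: ifP => //; lia.
    case: (iG 0 m0) => [h1 h2 h3].
    have F1 : insF 0 b G 1 = ex2 0 b (G 0) by rewrite {1}e1 (insF_ex2 b0).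
    rewrite insF_p F1 /ex2 /=; splitif; rewrite ?andbT; try (apply/andP; split); lia.
  exists (ex2 0 b x); apply: T1 => //; lia.
Qed.

Section Fib2.
Variables (k : nat) (H : nat -> nat) (a : nat).
Hypothesis iH : invP k H.
Hypothesis ak : a < k.
Hypothesis aH : a < H a.
Local Notation p := a.+1.
Local Notation q := (H a).+1.
Local Notation F := (insF a.+1 (H a).+1 H).
Let pq : p < q. Proof. by []. Qed.
Let qm : q < k.+2. Proof. by case: (iH ak) => *; lia. Qed.
Let exa : ex2 p q a = a. Proof. by rewrite /ex2 ltnSn. Qed.
Let Fp : F p = q. Proof. exact: insF_p. Qed.
Let Fq : F q = p. Proof. exact: insF_q. Qed.

Lemma f2_i : occ k.+2 F a.
Proof.
have Fa : F a = (H a).+2.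
  by have := insF_ex2 pq H a; rewrite exa => ->; rewrite /ex2; splitif; lia.
by rewrite /occ Fp Fa; apply/and3P; split => //; lia.
Qed.

Lemma f2_iii : occ k H a -> occ k.+2 F a.+1.
Proof.
move=> /and3P [h1 h2 /eqP h3].
have e2 : ex2 p q a.+1 = a.+2 by rewrite /ex2; splitif; lia.
have F2 : F a.+2 = (H a.+1).+1.
  by have := insF_ex2 pq H a.+1; rewrite e2 => ->; rewrite /ex2; splitif; lia.
by rewrite /occ F2 Fp; apply/and3P; split => //; lia.
Qed.

Lemma f2_ii x : x <> a -> occ k H x -> occ k.+2 F (ex2 p q x) /\ ex2 p q x <> a.
Proof.
move=> xa ox; split; last first.
  by move=> e; apply: xa; apply: (ex2_inj pq); rewrite exa.
have /and3P [h1 h2 /eqP h3] := ox.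
case: (iH ak) => _ _ Haa.
have Hx : H (H x) = x by case: (iH (ltnW h1)).
have Hx1 : H (H x.+1) = x.+1 by case: (iH h1).
have c1 : x.+1 <> H a.
  by move=> e; move: h2; rewrite e Haa; lia.
apply: T1 => //.
- lia.
- lia.
- by move=> e; apply: c1; rewrite -Hx1; congr H; lia.
- move=> e; apply: xa; rewrite -Hx -Haa; congr H; lia.
Qed.

Lemma f2_iv y : occ k.+2 F y -> y = a \/ occ k H (cmp2 p q y).
Proof.
move=> oc; case: (y =P a) => [->|ya]; [by left | right].
case: (y =P p) => [yp|ynp].
  move: oc; rewrite yp /occ Fp.
  case: (a.+2 =P q) => [e|ne].
    by rewrite e Fq; move=> /and3P [_ h _]; lia.
  have e2 : ex2 p q a.+1 = a.+2 by rewrite /ex2; splitif; lia.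
  have := insF_ex2 pq H a.+1; rewrite e2 => ->; move=> /and3P [h1 h2 /eqP h3].
  have c : cmp2 p q a.+1 = a by rewrite /cmp2; splitif; lia.
  rewrite c; move: h2 h3; rewrite /ex2; splitif => h2 h3; apply/and3P; split; lia.
case: (y.+1 =P q) => [yq|ynq].
  by move: oc; rewrite /occ yq Fq => /and3P [_ h _]; lia.
case: (y =P q) => [yq|ynq'].
  by move: oc; rewrite /occ yq Fq => /and3P [_ h /eqP e]; lia.
have ynp1 : y.+1 <> p by lia.
by case: (T2 pq qm oc ynp ynq' ynp1 ynq).
Qed.
End Fib2.

Lemma agree_sym m F F' : agree m F F' -> agree m F' F.
Proof. by move=> h x xm; rewrite h. Qed.
Lemma agree_trans m F1 F2 F3 : agree m F1 F2 -> agree m F2 F3 -> agree m F1 F3.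
Proof. by move=> h1 h2 x xm; rewrite h1 ?h2. Qed.

Lemma pair_uniq m G x y b : invP m G -> occ m G x -> occ m G y ->
  (b = x.+2 \/ b = (G x.+1).+2) -> (b = y.+2 \/ b = (G y.+1).+2) -> x = y.
Proof.
move=> iG ox oy.
have /and3P [x1 x2 /eqP x3] := ox.
have /and3P [y1 y2 /eqP y3] := oy.
have [_ _ Gx1] := iG _ x1.
have [_ _ Gy1] := iG _ y1.
have [_ _ Gx] := iG _ (ltnW x1).
have [_ _ Gy] := iG _ (ltnW y1).
have cross : forall u v, occ m G u -> occ m G v -> u <> G v.+1.
  move=> u v /and3P [u1 u2 /eqP u3] /and3P [v1 v2 /eqP v3] e.
  have [_ _ Gv1] := iG _ v1.
  have : G u = v.+1 by rewrite e Gv1.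
  lia.
case=> -> [e|e].
- lia.
- by case: (cross x y ox oy); lia.
- by case: (cross y x oy ox); lia.
- have : G (G x.+1) = G (G y.+1) by congr G; lia.
  rewrite Gx1 Gy1; lia.
Qed.

Section Fin.
Variable m : nat.
Definition TT := {ffun 'I_m -> 'I_m}.
Definition nf (f : TT) x := odflt x (omap (fun i : 'I_m => val (f i)) (insub x)).
Lemma nfE (f : TT) (i : 'I_m) : nf f i = f i.
Proof. by rewrite /nf valK. Qed.
Lemma nf_lt (f : TT) x : x < m -> nf f x < m.
Proof. by move=> xm; rewrite -[x]/(val (Ordinal xm)) nfE. Qed.
Lemma nf_ge (f : TT) x : m <= x -> nf f x = x.
Proof. by move=> xm; rewrite /nf insubF //; apply/negbTE; rewrite -leqNgt. Qed.
Definition mk (F : nat -> nat) : TT := [ffun i : 'I_m => insubd i (F i)].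
Lemma nf_mk F x : x < m -> F x < m -> nf (mk F) x = F x.
Proof. by move=> xm Fx; rewrite -[x]/(val (Ordinal xm)) nfE ffunE val_insubd /= Fx. Qed.
Lemma mk_agree F : (forall x, x < m -> F x < m) -> agree m (nf (mk F)) F.
Proof. by move=> h x xm; rewrite nf_mk // h. Qed.
Lemma nf_inj (f g : TT) : agree m (nf f) (nf g) -> f = g.
Proof. by move=> h; apply/ffunP => i; apply: val_inj; have := h i (ltn_ord i); rewrite !nfE. Qed.

Definition invb (f : TT) := [forall i : 'I_m, (nf f (nf f i) == i) && (nf f i != i)].
Lemma invbP f : reflect (invP m (nf f)) (invb f).
Proof.
apply: (iffP forallP) => h.
- move=> x xm; have /andP [/eqP h1 /eqP h2] := h (Ordinal xm).
  by split => //; apply: nf_lt.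
- move=> i; case: (h i (ltn_ord i)) => _ h2 h3.
  by rewrite h3 eqxx; apply/eqP.
Qed.
Definition noocc (f : TT) := [forall i : 'I_m, ~~ occ m (nf f) i].
Lemma nooccP f : reflect (forall y, ~~ occ m (nf f) y) (noocc f).
Proof.
apply: (iffP forallP) => h y //.
case: (ltnP y m) => ym; first exact: (h (Ordinal ym)).
by rewrite /occ ltnNge (leq_trans ym) //.
Qed.
Definition occs (f : TT) := [set i : 'I_m | occ m (nf f) i].
Definition AA := [set f : TT | invb f && noocc f].
Definition BB := [set f : TT | invb f && (#|occs f| == 1)].

Lemma occ_lt F y : occ m F y -> y < m.
Proof. by case/and3P => h _ _; apply: ltnW. Qed.

Lemma BBP f : reflect (invP m (nf f) /\ exists x, occ m (nf f) x /\ forall y, occ m (nf f) y -> y = x)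
  (f \in BB).
Proof.
rewrite inE; apply: (iffP andP) => [[/invbP h /cards1P [x hx]]|[h [x [hx hu]]]].
- split => //; exists x; split.
    have : x \in occs f by rewrite hx set11.
    by rewrite inE.
  move=> y oy; have yl := occ_lt oy.
  have : Ordinal yl \in occs f by rewrite inE.
  by rewrite hx inE => /eqP <-.
- split; first exact/invbP.
  apply/cards1P; exists (Ordinal (occ_lt hx)); apply/setP => i.
  rewrite !inE; apply/idP/eqP => [oi|->//].
  by apply: val_inj; rewrite /= (hu _ oi).
Qed.
End Fin.

Section Step1.
Variable m : nat.
Hypothesis m0 : 0 < m.

Definition rem1 (f : TT m.+2) : TT m := mk m (remF 0 (nf f 0) (nf f)).
Definition ins1 (g : TT m) (b : nat) : TT m.+2 := mk m.+2 (insF 0 b (nf g)).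

Section G.
Variables (g : TT m) (b : nat).
Hypotheses (ig : invP m (nf g)) (b0 : 0 < b) (bm : b < m.+2).

Lemma ins1_agree : agree m.+2 (nf (ins1 g b)) (insF 0 b (nf g)).
Proof. by apply: mk_agree => x xm; case: (ins_inv b0 bm ig xm). Qed.
Lemma ins1_inv : invP m.+2 (nf (ins1 g b)).
Proof. exact: inv_agree (agree_sym ins1_agree) (ins_inv b0 bm ig). Qed.
Lemma ins1_0 : nf (ins1 g b) 0 = b.
Proof. by rewrite ins1_agree // insF_p. Qed.
Lemma rem1_ins1 : rem1 (ins1 g b) = g.
Proof.
apply: nf_inj; rewrite /rem1 ins1_0.
have iF := ins1_inv.
have Fp : nf (ins1 g b) 0 = b := ins1_0.
apply: agree_trans.
  by apply: mk_agree => x xm; case: (rem_inv b0 bm iF Fp xm).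
apply: agree_trans (rem_agree b0 bm ins1_agree) _.
by move=> x _; rewrite (remK b0).
Qed.
End G.

Lemma rem1_props (f : TT m.+2) : invP m.+2 (nf f) ->
  [/\ 0 < nf f 0, nf f 0 < m.+2, invP m (nf (rem1 f)) & ins1 (rem1 f) (nf f 0) = f].
Proof.
move=> iF; case: (iF 0 (ltn0Sn _)) => h1 h2 h3.
have b0 : 0 < nf f 0 by case: (nf f 0) h2.
have ag : agree m (nf (rem1 f)) (remF 0 (nf f 0) (nf f)).
  by apply: mk_agree => x xm; case: (rem_inv b0 h1 iF (erefl _) xm).
have iR : invP m (nf (rem1 f)).
  exact: inv_agree (agree_sym ag) (rem_inv b0 h1 iF (erefl _)).
split => //; apply: nf_inj.
apply: agree_trans (ins1_agree iR b0 h1) _.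
apply: agree_trans (ins_agree b0 h1 ag) _.
exact: insK.
Qed.

Lemma noocc_agree k F F' : agree k F F' -> (forall y, ~~ occ k F y) -> forall y, ~~ occ k F' y.
Proof. by move=> h n y; rewrite -(occ_agree _ h). Qed.

Lemma ins1_AA (g : TT m) (b : nat) : invP m (nf g) -> 0 < b -> b < m.+2 ->
  (ins1 g b \in AA m.+2) <->
  ~ (b = (nf g 0).+2 \/ exists2 x, occ m (nf g) x & (b <> x.+2 /\ b <> (nf g x.+1).+2)).
Proof.
move=> ig b0 bm; rewrite -(fib1 m0 ig b0 bm) inE.
have ag := ins1_agree ig b0 bm.
split.
- case/andP => _ /nooccP h [y oy].
  by move: (h y); rewrite (occ_agree _ ag) oy.
- move=> h; apply/andP; split; first exact/invbP/ins1_inv.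
  apply/nooccP => y; apply/negP => oy; apply: h; exists y.
  by rewrite -(occ_agree _ ag).
Qed.

Definition VV (g : TT m) := [set b : 'I_(m.+2) | (0 < b) && (ins1 g b \in AA m.+2)].

Lemma fiber1 (g : TT m) :
  #|[set f in AA m.+2 | rem1 f == g]| =
  if g \in AA m then m else if g \in BB m then 2 else 0.
Proof.
case: (boolP (invb g)) => [/invbP ig|nig]; last first.
  have -> : g \in AA m = false by rewrite inE (negbTE nig).
  have -> : g \in BB m = false by rewrite inE (negbTE nig).
  apply/eqP; rewrite cards_eq0; apply/eqP/setP => f; rewrite !inE.
  apply/negP => /andP [/andP [/invbP iF _] /eqP e].
  case: (rem1_props iF) => _ _ iR _; move: nig; rewrite -e.
  by move/invbP.
have -> : [set f in AA m.+2 | rem1 f == g] = [set ins1 g b | b : 'I_(m.+2) in VV g].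
  apply/setP => f; rewrite !inE; apply/andP/imsetP.
  - case=> /andP [/invbP iF nf0] /eqP e.
    case: (rem1_props iF) => b0 bm _ e2.
    exists (Ordinal bm); last by rewrite /= -[LHS]e2 e.
    rewrite inE /= b0 -e e2 inE nf0 andbT; exact/invbP.
  - case=> b; rewrite inE => /andP [b0 bA] ->; split; first by move: bA; rewrite inE.
    by rewrite (rem1_ins1 ig b0 (ltn_ord b)).
rewrite card_in_imset; last first.
  move=> b1 b2; rewrite !inE => /andP [b10 _] /andP [b20 _] e.
  apply: ord_inj; rewrite -(ins1_0 ig b10 (ltn_ord b1)) -(ins1_0 ig b20 (ltn_ord b2)).
  by rewrite e.
have Vc : forall b : 'I_(m.+2), b \in VV g ->
    [/\ 0 < b, nat_of_ord b <> ((nf g) 0).+2 & forall y, occ m (nf g) y -> nat_of_ord b = y.+2 \/ nat_of_ord b = ((nf g) y.+1).+2].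
  move=> b; rewrite inE => /andP [b0 /(ins1_AA ig b0 (ltn_ord b)) h]; split => //.
    by move=> e; apply: h; left.
  move=> y oy; case: (nat_of_ord b =P y.+2) => [|n1]; first by left.
  case: (nat_of_ord b =P ((nf g) y.+1).+2) => [|n2]; first by right.
  by case: h; right; exists y.
have Vi : forall b : 'I_(m.+2), 0 < b -> nat_of_ord b <> ((nf g) 0).+2 ->
    (forall y, occ m (nf g) y -> nat_of_ord b = y.+2 \/ nat_of_ord b = ((nf g) y.+1).+2) -> b \in VV g.
  move=> b b0 n h; rewrite inE b0 /=; apply/(ins1_AA ig b0 (ltn_ord b)).
  case=> [//|[x ox [n1 n2]]].
  by case: (h x ox).
have G0 : (nf g) 0 < m by case: (ig 0 m0).
case: (boolP (g \in AA m)) => [gA|gnA].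
  have nog : forall y, ~~ occ m (nf g) y by move: gA; rewrite inE => /andP [_ /nooccP].
  have c2 : ((nf g) 0).+2 < m.+2 by [].
  have -> : VV g = ~: [set ord0; Ordinal c2].
    apply/setP => b; apply/idP/idP.
    - move/Vc => [b0 n _]; rewrite !inE -!val_eqE /=; apply/negP => /orP [/eqP e | /eqP e]; lia.
    - move=> hb; apply: Vi; move: hb; rewrite !inE -!val_eqE /= => hb; try lia.
      by move=> y oy; move: (nog y); rewrite oy.
  have := cardsC [set ord0; Ordinal c2]; rewrite cards2 card_ord.
  have -> : (ord0 != Ordinal c2) = true by rewrite -val_eqE.
  by move=> /= ?; lia.
case: (boolP (g \in BB m)) => [gB|gnB].
  case/BBP: gB => _ [x0 [ox0 ux0]].
  have /and3P [x1 x2 /eqP x3] := ox0.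
  have [_ _ Gx1] := ig _ x1.
  have [_ _ Gx] := ig _ (ltnW x1).
  have [_ _ GG0] := ig _ m0.
  have G1 : (nf g) x0.+1 < m by case: (ig _ x1).
  have c1 : x0.+2 < m.+2 by lia.
  have c3 : ((nf g) x0.+1).+2 < m.+2 by lia.
  have -> : VV g = [set Ordinal c1; Ordinal c3].
    apply/setP => b; apply/idP/idP.
    - move/Vc => [b0 n h]; rewrite !inE -!val_eqE /=; case: (h x0 ox0) => ->; rewrite eqxx //; lia.
    - move=> hb; have {}hb : (nat_of_ord b == x0.+2) || (nat_of_ord b == ((nf g) x0.+1).+2).
        by move: hb; rewrite !inE -!val_eqE.
      apply: Vi.
      + lia.
      + move=> e; case/orP: hb => /eqP e2.
          have e3 : x0 = (nf g) 0 by lia.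
          have : (nf g) x0 = 0 by rewrite e3; exact: GG0.
          lia.
        have : (nf g) ((nf g) x0.+1) = (nf g) ((nf g) 0) by congr (nf g); lia.
        by rewrite Gx1 GG0.
      + move=> y oy; rewrite (ux0 y oy); case/orP: hb => /eqP ->; auto.
  rewrite cards2 -val_eqE /=.
  have -> : (x0.+2 != ((nf g) x0.+1).+2) = true by lia.
  by [].
apply/eqP; rewrite cards_eq0; apply/negPn/negP => /set0Pn [b /Vc [b0 n h]].
have : ~~ noocc g by move: gnA; rewrite inE (introT (invbP _) ig).
rewrite /noocc negb_forall => /existsP [i]; rewrite negbK => oi.
move/negP: gnB; apply; apply/BBP; split => //; exists i; split => // y oy.
exact: (pair_uniq ig oy oi (h y oy) (h i oi)).
Qed.
End Step1.

Lemma sum_ind (T : finType) (A : {set T}) : \sum_(g : T) (g \in A : nat) = #|A|.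
Proof. rewrite -sum1_card [RHS]big_mkcond /=; apply: eq_bigr => g _; by case: (g \in A). Qed.

Lemma AB_disj k (g : TT k) : g \in AA k -> g \in BB k = false.
Proof.
rewrite !inE => /andP [_ /nooccP h]; apply/negP => /andP [_ /cards1P [x hx]].
have : x \in occs g by rewrite hx set11.
by rewrite inE (negbTE (h x)).
Qed.

Section S1.
Variable m : nat.
Hypothesis m0 : 0 < m.
Lemma step1 : #|AA m.+2| = m * #|AA m| + 2 * #|BB m|.
Proof.
rewrite -sum1_card (partition_big (@rem1 m) predT) //=.
rewrite (eq_bigr (fun g => m * (g \in AA m) + 2 * (g \in BB m))); last first.
  move=> g _; rewrite sum1dep_card fiber1 //.
  case: (boolP (g \in AA m)) => gA; first by rewrite AB_disj // muln1 muln0 addn0.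
  by case: (g \in BB m); rewrite /= ?muln1 ?muln0.
by rewrite big_split /= -!big_distrr /= !sum_ind.
Qed.
End S1.

Section Open.
Variable k : nat.
Definition Op (h : TT k) := [set a : 'I_k | a < nf h a].
Lemma Op_card (h : TT k) : invP k (nf h) -> #|Op h| = k./2.
Proof.
move=> ih.
have hh : forall a : 'I_k, h (h a) = a.
  move=> a; apply: ord_inj; have [_ _ e] := ih a (ltn_ord a).
  by rewrite -!nfE.
have hinj : injective (fun a : 'I_k => h a) by move=> a b e; rewrite -(hh a) -(hh b) e.
have eC : ~: Op h = [set h a | a in Op h].
  apply/setP => c; rewrite !inE; apply/idP/imsetP.
  - move=> hc; exists (h c); last by rewrite hh.
    rewrite inE -!nfE; have [_ h2 h3] := ih c (ltn_ord c); rewrite h3; lia.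
  - case=> a; rewrite inE => ha ->; rewrite -!nfE; have [_ h2 h3] := ih a (ltn_ord a).
    rewrite h3; lia.
have := cardsC (Op h); rewrite eC card_imset // card_ord => e.
move: e; move: (#|Op h|) => n e.
by apply/eqP; rewrite -e addnn doubleK.
Qed.
End Open.

Section Step2.
Variable k : nat.
Definition x0f (f : TT k.+2) := find (occ k.+2 (nf f)) (iota 0 k.+2).
Definition contr (f : TT k.+2) : TT k :=
  mk k (remF (x0f f).+1 (nf f (x0f f).+1) (nf f)).
Definition exp1 (h : TT k) (a : nat) : TT k.+2 := mk k.+2 (insF a.+1 (nf h a).+1 (nf h)).

Lemma find_occ (F : nat -> nat) x : occ k.+2 F x -> (forall y, occ k.+2 F y -> y = x) ->
  find (occ k.+2 F) (iota 0 k.+2) = x.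
Proof.
move=> ox ux.
have hs : has (occ k.+2 F) (iota 0 k.+2).
  by apply/hasP; exists x => //; rewrite mem_iota add0n (occ_lt ox).
have := nth_find 0 hs; rewrite nth_iota ?add0n; first exact: ux.
by rewrite -[X in _ < X](size_iota 0 k.+2) -has_find.
Qed.

Section E.
Variables (h : TT k) (a : nat).
Hypotheses (ih : invP k (nf h)) (ak : a < k) (aH : a < nf h a).
Let qm : (nf h a).+1 < k.+2. Proof. by case: (ih ak) => *; lia. Qed.
Let pq : a.+1 < (nf h a).+1. Proof. by []. Qed.
Lemma exp1_agree : agree k.+2 (nf (exp1 h a)) (insF a.+1 (nf h a).+1 (nf h)).
Proof. by apply: mk_agree => x xm; case: (ins_inv pq qm ih xm). Qed.
Lemma exp1_inv : invP k.+2 (nf (exp1 h a)).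
Proof. exact: inv_agree (agree_sym exp1_agree) (ins_inv pq qm ih). Qed.
Lemma exp1_occ_a : occ k.+2 (nf (exp1 h a)) a.
Proof. by rewrite (occ_agree _ exp1_agree); apply: f2_i. Qed.
Lemma exp1_occ_u : (forall x, ~~ occ k (nf h) x) ->
  forall y, occ k.+2 (nf (exp1 h a)) y -> y = a.
Proof.
move=> no y; rewrite (occ_agree _ exp1_agree) => /(f2_iv ih ak aH) [//|o].
by move: (no (cmp2 a.+1 (nf h a).+1 y)); rewrite o.
Qed.
Lemma exp1_BB : (forall x, ~~ occ k (nf h) x) -> exp1 h a \in BB k.+2.
Proof.
move=> no; apply/BBP; split; first exact: exp1_inv.
by exists a; split; [exact: exp1_occ_a | exact: exp1_occ_u].
Qed.
Lemma contr_exp1 : (forall x, ~~ occ k (nf h) x) -> contr (exp1 h a) = h.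
Proof.
move=> no; apply: nf_inj; rewrite /contr /x0f (find_occ exp1_occ_a (exp1_occ_u no)).
have Fp : nf (exp1 h a) a.+1 = (nf h a).+1 by rewrite exp1_agree ?insF_p //; lia.
rewrite Fp.
apply: agree_trans.
  by apply: mk_agree => x xm; case: (rem_inv pq qm exp1_inv Fp xm).
apply: agree_trans (rem_agree pq qm exp1_agree) _.
by move=> x _; rewrite (remK pq).
Qed.
End E.

Lemma contr_props (f : TT k.+2) : f \in BB k.+2 ->
  [/\ contr f \in AA k, x0f f < k, x0f f < nf (contr f) (x0f f)
    & exp1 (contr f) (x0f f) = f].
Proof.
case/BBP => iF [x0 [ox ux]].
have ex : x0f f = x0 by rewrite /x0f (find_occ ox ux).
rewrite ex.
have /and3P [x1 x2 /eqP x3] := ox.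
set q := nf f x0.+1.
have pq : x0.+1 < q by [].
have qm : q < k.+2 by case: (iF _ x1).
have Fp : nf f x0.+1 = q by [].
have ag : agree k (nf (contr f)) (remF x0.+1 q (nf f)).
  by rewrite /contr ex; apply: mk_agree => x xm; case: (rem_inv pq qm iF Fp xm).
have iH : invP k (nf (contr f)) by apply: inv_agree (agree_sym ag) (rem_inv pq qm iF Fp).
have xk : x0 < k by lia.
have Hx0 : nf (contr f) x0 = q.-1.
  rewrite ag // /remF.
  have -> : ex2 x0.+1 q x0 = x0 by rewrite /ex2 ltnSn.
  rewrite x3 -/q /cmp2; splitif; lia.
have aH : x0 < nf (contr f) x0 by rewrite Hx0; lia.
have qq : (nf (contr f) x0).+1 = q by rewrite Hx0; lia.
have ag2 : agree k.+2 (insF x0.+1 (nf (contr f) x0).+1 (nf (contr f))) (nf f).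
  rewrite qq; apply: agree_trans (ins_agree pq qm ag) _.
  exact: insK.
have eF : exp1 (contr f) x0 = f.
  apply: nf_inj; exact: agree_trans (exp1_agree iH xk aH) ag2.
split => //.
rewrite inE (introT (invbP _) iH) /=; apply/nooccP => x; apply/negP => ox'.
case: (x =P x0) => [e|ne].
  have := f2_iii iH xk aH; rewrite -e => /(_ ox').
  rewrite e (occ_agree _ ag2) => /ux; lia.
have [o1 o2] := f2_ii iH xk aH ne ox'.
by move: o1; rewrite (occ_agree _ ag2) => /ux.
Qed.

Lemma fiber2 (h : TT k) :
  #|[set f in BB k.+2 | contr f == h]| = if h \in AA k then k./2 else 0.
Proof.
case: (boolP (h \in AA k)) => [hA|hnA]; last first.
  apply/eqP; rewrite cards_eq0; apply/negPn/negP => /set0Pn [f].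
  rewrite inE => /andP [fB /eqP e].
  by case: (contr_props fB) => + _ _ _; rewrite e (negbTE hnA).
have := hA; rewrite inE => /andP [/invbP ih /nooccP no].
have -> : [set f in BB k.+2 | contr f == h] = [set exp1 h a | a : 'I_k in Op h].
  apply/setP => f; rewrite inE; apply/andP/imsetP.
  - case=> fB /eqP e; case: (contr_props fB) => _ xk aH e2.
    by exists (Ordinal xk); rewrite ?inE -e //= e2.
  - case=> a; rewrite inE => aH ->; split; first exact: exp1_BB.
    by rewrite contr_exp1.
rewrite card_in_imset; first exact: Op_card.
move=> a1 a2; rewrite !inE => h1 h2 e; apply: ord_inj.
have := exp1_occ_u ih (ltn_ord a2) h2 no; rewrite -e; apply.
exact: exp1_occ_a.
Qed.

Lemma step2 : #|BB k.+2| = k./2 * #|AA k|.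
Proof.
rewrite -sum1_card (partition_big contr predT) //=.
rewrite (eq_bigr (fun h => k./2 * (h \in AA k))); last first.
  move=> h _; rewrite sum1dep_card fiber2.
  by case: (h \in AA k); rewrite /= ?muln1 ?muln0.
by rewrite -big_distrr /= sum_ind.
Qed.
End Step2.

Section Glue.
Variable n : nat.
Local Notation m := n.*2.
Implicit Types (f : TT m) (M : {set arc n}).

Definition Phi f : {set arc n} := [set e : arc n | (e.1 < e.2) && (f e.1 == e.2)].

Lemma inv_ord f : invP m (nf f) -> (forall i, f (f i) = i) /\ (forall i, f i != i).
Proof.
move=> iF; split => i; have [_ h2 h3] := iF i (ltn_ord i).
  by apply: ord_inj; rewrite -!nfE.
by apply/eqP => e; apply: h2; rewrite nfE e.
Qed.

Lemma Phi_match f : invP m (nf f) -> is_matching (Phi f).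
Proof.
move=> iF; have [ff fn] := inv_ord iF.
apply/andP; split.
  by apply/forall_inP => e; rewrite inE => /andP [].
apply/forallP => p; apply/cards1P.
exists (if p < f p then (p, f p) else (f p, p)).
apply/setP => [[u v]]; rewrite !inE /=.
have fpn := fn p.
case: (ltnP p (f p)) => hp; rewrite xpair_eqE.
- apply/idP/idP.
  + case/andP => /andP [uv /eqP fu] /orP [/eqP up | /eqP vp].
      by rewrite up in fu *; rewrite fu !eqxx.
    have : u = f p by rewrite -vp -fu ff.
    move=> e; move: uv; rewrite e vp; lia.
  + case/andP => /eqP -> /eqP ->; rewrite hp eqxx /=.
    by rewrite eqxx.
- apply/idP/idP.
  + case/andP => /andP [uv /eqP fu] /orP [/eqP up | /eqP vp].
      rewrite up in fu uv; move: uv; rewrite -fu.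
      have : (f p : nat) != p by rewrite val_eqE.
      lia.
    have e : u = f p by rewrite -vp -fu ff.
    by rewrite e vp !eqxx.
  + case/andP => /eqP -> /eqP ->; rewrite ff eqxx orbT andbT.
    have : (f p : nat) != p by rewrite val_eqE.
    lia.
Qed.

Lemma Phi_has f : invP m (nf f) -> has_endhered21 (Phi f) = ~~ noocc f.
Proof.
move=> iF; have [ff fn] := inv_ord iF.
rewrite /noocc negb_forall; apply/idP/idP.
- case/exists_inP => e1; rewrite inE => /andP [lt1 /eqP f1].
  case/exists_inP => e2; rewrite inE => /andP [lt2 /eqP f2] /andP [/eqP c1 /eqP c2].
  apply/existsP; exists e1.1; rewrite negbK /occ.
  have e21 : nf f (e1.1).+1 = e2.2 by rewrite -addn1 -c1 nfE f2.
  rewrite e21 nfE f1 c2 addn1 eqxx andbT.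
  have := ltn_ord e2.1; rewrite c1 addn1 => -> /=.
  by move: lt2; rewrite c1 addn1.
- case/existsP => x /negPn ox; rewrite /has_endhered21.
  have /and3P [x1 x2 /eqP x3] := ox.
  apply/exists_inP; exists (x, f x).
    rewrite inE /= eqxx andbT -nfE x3; exact: leq_trans (ltnW x2) (leqnSn _).
  apply/exists_inP; exists (Ordinal x1, f (Ordinal x1)).
    rewrite inE /= eqxx andbT -nfE; exact: x2.
  rewrite /= addn1 eqxx /=; apply/eqP; rewrite addn1 -!nfE. exact: x3.
Qed.

Lemma Phi_inj : {in [pred f | invb f] &, injective Phi}.
Proof.
move=> f g /invbP iF /invbP iG e.
have [ff fn] := inv_ord iF; have [gg gn] := inv_ord iG.
apply/ffunP => p.
have key : forall u v, (u, v) \in Phi f -> g u = v.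
  by move=> u v; rewrite e inE => /andP [_ /eqP].
case: (ltnP p (f p)) => hp.
  by apply: esym; apply: key; rewrite inE /= hp eqxx.
have hp' : f p < p.
  have : (f p : nat) != p by rewrite val_eqE.
  lia.
have : g (f p) = p by apply: key; rewrite inE /= hp' ff eqxx.
by move=> h; rewrite -[in RHS]h gg.
Qed.

Lemma match_Phi M : is_matching M -> exists2 f, invb f & M = Phi f.
Proof.
case/andP => /forall_inP lt /forallP c1.
pose S p := [set e in M | (e.1 == p) || (e.2 == p)].
pose ep p := odflt (p, p) [pick e in S p].
have epS : forall p, S p = [set ep p].
  move=> p; have /cards1P [e he] := c1 p.
  rewrite /ep; case: pickP => [e' He' | H0] /=.
    by move: He'; rewrite /S he => /set1P ->.
  by have := H0 e; rewrite /S he set11.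
have epM : forall p, ep p \in M /\ ((ep p).1 == p) || ((ep p).2 == p).
  move=> p; have : ep p \in S p by rewrite epS set11.
  by rewrite inE => /andP.
have epU : forall p e, e \in M -> (e.1 == p) || (e.2 == p) -> e = ep p.
  move=> p e eM eo; have : e \in S p by rewrite inE eM eo.
  by rewrite epS => /set1P.
pose f : TT m := [ffun p => if (ep p).1 == p then (ep p).2 else (ep p).1].
have fA : forall p, (ep p = (p, f p) /\ p < f p) \/ (ep p = (f p, p) /\ f p < p).
  move=> p; have [eM eo] := epM p; have l := lt _ eM; rewrite ffunE.
  move: eM eo l; case: (ep p) => u v /= eM eo l.
  case: (u =P p) => [e|up]; first by left; subst u; split.
  have vp : v = p by move: eo; case: eqP => // _ /eqP.
  by right; rewrite vp in l *.
have fn : forall p, f p != p.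
  move=> p; apply/eqP => e; case: (fA p) => [[_ l]|[_ l]]; move: l; rewrite e ltnn //.
have ff : forall p, f (f p) = p.
  move=> p; case: (fA p) => [[e1 l1]|[e1 l1]].
  - have E : ep (f p) = ep p.
      by apply/esym/epU; [exact: (epM p).1 | rewrite e1 /= eqxx orbT].
    rewrite [in LHS]ffunE E e1 /=.
    by have -> : (p == f p) = false by apply/negbTE; rewrite eq_sym fn.
  - have E : ep (f p) = ep p.
      by apply/esym/epU; [exact: (epM p).1 | rewrite e1 /= eqxx].
    by rewrite [in LHS]ffunE E e1 /= eqxx.
exists f.
  by apply/forallP => i; rewrite !nfE ff eqxx /=; exact: fn i.
apply/setP => e; rewrite inE; apply/idP/idP.
- move=> eM; have E : e = ep e.1 by apply: epU => //; rewrite eqxx.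
  by rewrite ffunE -E eqxx (lt e eM) eqxx.
- case/andP => l /eqP fe; case: (fA e.1) => [[E _]|[E l2]].
    have -> : e = ep e.1 by rewrite E fe; case: e {l fe E}.
    exact: (epM _).1.
  by move: l2; rewrite fe ltnNge ltnW.
Qed.
End Glue.

Lemma a0_AA n : a0 n = #|AA n.*2|.
Proof.
rewrite /a0.
have -> : [set M : {set arc n} | is_matching M && ~~ has_endhered21 M] = (@Phi n) @: AA n.*2.
  apply/setP => M; rewrite inE; apply/andP/imsetP.
  - case=> mM hM; case: (match_Phi mM) => f fi e; exists f => //.
    move: hM; rewrite e (Phi_has (elimT (invbP _) fi)) negbK => no.
    by rewrite inE fi.
  - case=> f; rewrite inE => /andP [fi no] ->; split.
      exact: Phi_match (elimT (invbP _) fi).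
    by rewrite (Phi_has (elimT (invbP _) fi)) no.
rewrite card_in_imset // => f g; rewrite !inE => /andP [fi _] /andP [gi _].
exact: Phi_inj.
Qed.

Lemma AA2 : #|AA 2| = 1.
Proof.
apply/eqP/cards1P; exists (mk 2 (fun x => 1 - x)).
have ag : agree 2 (nf (mk 2 (fun x => 1 - x))) (fun x => 1 - x).
  by apply: mk_agree => x; lia.
apply/setP => f; rewrite !inE; apply/andP/eqP.
- case=> /invbP iF _; apply: nf_inj; apply: agree_trans _ (agree_sym ag).
  move=> x xm; have [h1 h2 _] := iF x xm; lia.
- move=> ->; split.
    apply/invbP; apply: inv_agree (agree_sym ag) _ => x xm; split; lia.
  apply/nooccP => y; rewrite (occ_agree _ ag) /occ; apply/negP => /and3P [h1 h2 _]; lia.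
Qed.

Theorem corollary2 :
  a0 1 = 1 /\ a0 2 = 2 /\
  (forall n : nat, 2 <= n -> a0 n.+1 = 2 * n * a0 n + 2 * (n - 1) * a0 n.-1).
Proof.
have B2 : #|BB 2| = 0 by rewrite (step2 0).
split; first by rewrite a0_AA AA2.
split.
  rewrite a0_AA (step1 (m:=2)) // B2 AA2 //.
case=> [//|n] n2.
rewrite !a0_AA.
have -> : (n.+2).*2 = (n.+1).*2.+2 by [].
rewrite step1 ?double_gt0 //.
have -> : (n.+1).*2 = (n.*2).+2 by [].
rewrite step2 doubleK /= subn1 /=.
have -> : n.*2.+2 = 2 * n.+1 by rewrite -mul2n mulnS.
by rewrite mulnA.
Qed.
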